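(* Let $K$ be a field and $K\langle x,y\rangle$ the free unitary associative algebra of rank $2$ over $K$. Let $V=\mathrm{span}([x,y]^k\mid k\ge 0)$ where $[x,y]=xy-yx$. Let $u(x,y)\in K\langle x,y\rangle\setminus V$ be written as $u=\sum\gamma_{ab}u_{ab}$, $\gamma_{ab}\in K$, in the basis of elements $$u_{ab}=x^{a_1}y^{b_1}[x,y]x^{a_2}y^{b_2}\cdots x^{a_r}y^{b_r}[x,y]x^{a_{r+1}}y^{b_{r+1}},\quad a_i,b_i,r\ge0,$$ and let $\rho=(\alpha x+p(y),\beta y+\gamma)$, with $\alpha,\beta\in K\setminus\{0\}$, $\gamma\in K$, $p(y)\in K[y]$ of degree at least $2$, be a nonaffine triangular automorphism. If $a_1=\cdots=a_{r+1}=0$ for all summands $u_{ab}$ with nonzero coefficient $\gamma_{ab}$, then $\deg u=\deg(\rho u)$. If some $a_i\neq0$ in some summand $u_{ab}$ with $\gamma_{ab}\neq0$, and $\deg p(y)=k>\deg u$, then $\deg(\overline{\rho u})\ge k$.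
   Context: The elements $u_{ab}$ above form a vector space basis of $K\langle x,y\rangle$. The automorphism $\rho=(f,g)$ means $\rho x=f$, $\rho y=g$, and $\rho u=u(f,g)$. $\deg$ denotes total degree. Since $V$ is a graded subspace, the quotient $\overline{K\langle x,y\rangle}=K\langle x,y\rangle/V$ inherits the grading; for $w\notin V$, $\overline{w}$ denotes its image and $\deg\overline{w}$ is the largest $s$ such that the degree-$s$ homogeneous component of $w$ does not lie in $V$. *)

(* Defs.v *)
From mathcomp Require Import all_boot all_algebra.
Set Implicit Arguments. Unset Strict Implicit. Unset Printing Implicit Defensive.
Import GRing.Theory.

(* The free unitary associative algebra K<x,y> over a field K, modelled
   concretely: a word in x,y is a [seq bool] (false = x, true = y), and an
   element is a formal finite linear combination [seq (coefficient, word)].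
   Two such lists denote the same element iff they have the same
   coefficient function [fa_coef]; all statements below only depend on
   elements through [fa_coef]. *)
Section FreeAlgebra.
Variable K : fieldType.

Definition word := seq bool.
Definition fa := seq (K * word).

Definition fa_coef (u : fa) (w : word) : K :=
  (\sum_(t <- u | t.2 == w) t.1)%R.
Definition fa_eq (u v : fa) : Prop := forall w, fa_coef u w = fa_coef v w.

Definition fa_add (u v : fa) : fa := u ++ v.
Definition fa_scale (c : K) (u : fa) : fa := [seq ((c * t.1)%R, t.2) | t <- u].
Definition fa_mul (u v : fa) : fa :=
  [seq ((s.1 * t.1)%R, s.2 ++ t.2) | s <- u, t <- v].
Definition fa_one : fa := [:: (1%R, [::])].
Definition fa_const (c : K) : fa := [:: (c, [::])].
Definition fa_x : fa := [:: (1%R, [:: false])].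
Definition fa_y : fa := [:: (1%R, [:: true])].
Definition fa_pow (u : fa) (n : nat) : fa := iter n (fa_mul u) fa_one.

Definition fa_comm : fa := fa_add (fa_mul fa_x fa_y) (fa_scale (-1)%R (fa_mul fa_y fa_x)).

Definition inV (u : fa) : Prop :=
  exists (n : nat) (c : nat -> K),
    fa_eq u (flatten [seq fa_scale (c i) (fa_pow fa_comm i) | i <- iota 0 n]).

(* total degree (u assumed nonzero) *)
Definition fa_deg (u : fa) : nat :=
  \max_(t <- u | fa_coef u t.2 != 0%R) size t.2.

Definition hom_comp (u : fa) (s : nat) : fa := [seq t <- u | size t.2 == s].

Definition subst_word (f g : fa) (w : word) : fa :=
  foldr (fun b acc => fa_mul (if b then g else f) acc) fa_one w.
Definition fa_subst (f g : fa) (u : fa) : fa :=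
  flatten [seq fa_scale t.1 (subst_word f g t.2) | t <- u].

Definition poly_y (p : {poly K}) : fa :=
  flatten [seq fa_scale p`_i (fa_pow fa_y i) | i <- iota 0 (size p)].

Definition rho_tri (alpha beta gamma : K) (p : {poly K}) (u : fa) : fa :=
  fa_subst (fa_add (fa_scale alpha fa_x) (poly_y p))
           (fa_add (fa_scale beta fa_y) (fa_const gamma)) u.

(* basis element u_ab = x^{a1}y^{b1}[x,y]x^{a2}y^{b2}...[x,y]x^{a_{r+1}}y^{b_{r+1}},
   indexed by the nonempty list [:: (a1,b1); ...; (a_{r+1},b_{r+1})] *)
Definition fa_block (a b : nat) : fa := fa_mul (fa_pow fa_x a) (fa_pow fa_y b).
Fixpoint u_ab (ab : seq (nat * nat)) : fa :=
  match ab with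
  | [::] => fa_one
  | [:: (a, b)] => fa_block a b
  | (a, b) :: rest => fa_mul (fa_block a b) (fa_mul fa_comm (u_ab rest))
  end.

Definition lincomb_uab (s : seq (K * seq (nat * nat))) : fa :=
  flatten [seq fa_scale t.1 (u_ab t.2) | t <- s].

End FreeAlgebra.

(* Main.v *)
Require Import Defs.
From mathcomp Require Import all_boot all_algebra.
From mathcomp Require Import monalg.
From mathcomp Require Import zify ring.
Set Implicit Arguments. Unset Strict Implicit. Unset Printing Implicit Defensive.
Import GRing.Theory.
Local Open Scope ring_scope.

(* Proof strategy: embed the list-based free algebra into the monoid algebra
   {malg K[{fmonom bool}]} (a genuine noncommutative ring from multinomials),
   compute top-degree components of rho(u_ab), and use a lexicographic-maximal
   word argument for the linear independence of the basis elements u_ab. *)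


Notation Alg K := {malg K[{fmonom bool}]}.
Definition mw (w : seq bool) : {fmonom bool} := FMonom w.

Definition emb {K : fieldType} (u : fa K) : Alg K :=
  \sum_(t <- u) << t.1 *g mw t.2 >>.

Lemma mw_eq (w w' : seq bool) : (mw w == mw w') = (w == w').
Proof. by rewrite fmP. Qed.

Lemma mwM (w w' : seq bool) : mmul (mw w) (mw w') = mw (w ++ w').
Proof. by apply/eqP; rewrite fmP fmM. Qed.

Lemma emb_coef {K : fieldType} (u : fa K) w : (emb u)@_(mw w) = fa_coef u w.
Proof.
rewrite /emb /fa_coef raddf_sum /= [RHS]big_mkcond /=.

by apply: eq_bigr => t _; rewrite mcoeffU mw_eq mulrb.
Qed.

Lemma malgPw {K : fieldType} (f g : Alg K) : (forall w, f@_(mw w) = g@_(mw w)) -> f = g.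
Proof. by move=> H; apply/malgP => -[w]; apply: H. Qed.

Lemma emb_cat {K : fieldType} (u v : fa K) : emb (u ++ v) = emb u + emb v.
Proof. by rewrite /emb big_cat. Qed.

Lemma emb_scale {K : fieldType} c (u : fa K) : emb (fa_scale c u) = c *: emb u.
Proof.
apply: malgPw => w; rewrite mcoeffZ !emb_coef /fa_coef /fa_scale big_map mulr_sumr.
by apply: eq_big => //.
Qed.

Lemma emb_mul {K : fieldType} (u v : fa K) : emb (fa_mul u v) = emb u * emb v.
Proof.
rewrite /emb /fa_mul big_allpairs_dep mulr_suml; apply: eq_bigr => s _.
rewrite mulr_sumr; apply: eq_bigr => t _.
by rewrite malgM_def fgmulUU mwM.
Qed.

Lemma emb_nil {K : fieldType} : emb ([::] : fa K) = 0.
Proof. by rewrite /emb big_nil. Qed.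

Lemma emb_flatten {K : fieldType} (T : Type) (s : seq T) (F : T -> fa K) :
  emb (flatten (map F s)) = \sum_(t <- s) emb (F t).
Proof.
elim: s => [|t s IH]; first by rewrite big_nil emb_nil.
by rewrite /= emb_cat IH big_cons.
Qed.

Lemma mw_nil : mw [::] = (mone : {fmonom bool}).
Proof. by apply/eqP; rewrite fmP fm1. Qed.

Lemma emb_one {K : fieldType} : emb (fa_one K) = 1.
Proof.
apply: malgPw => w; rewrite emb_coef mcoeff1 /fa_coef big_cons big_nil /= -mw_nil mw_eq eq_sym addr0.
by case: eqP.
Qed.

Lemma emb_const {K : fieldType} (c : K) : emb (fa_const c) = c%:MP.
Proof. by rewrite /emb /fa_const big_cons big_nil addr0 /= mw_nil. Qed.

Lemma emb_pow {K : fieldType} (u : fa K) n : emb (fa_pow u n) = emb u ^+ n.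
Proof.
elim: n => [|n IH]; first by rewrite expr0 emb_one.
by rewrite exprS /= emb_mul IH.
Qed.


Definition degle {K : fieldType} (n : nat) (g : Alg K) :=
  forall w, g@_(mw w) != 0 -> (size w <= n)%N.
Definition homog {K : fieldType} (n : nat) (g : Alg K) :=
  forall w, g@_(mw w) != 0 -> size w = n.

Lemma homog_degle {K : fieldType} n (g : Alg K) : homog n g -> degle n g.
Proof. by move=> H w /H ->. Qed.

Lemma sum_single {K : fieldType} (r : seq {fmonom bool}) (F : {fmonom bool} -> K) D :
  uniq r -> (D \notin r -> F D = 0) ->
  \sum_(k <- r) (if k == D then F k else 0) = F D.
Proof.
move=> ur HD; case Dr: (D \in r).
  by rewrite (bigD1_seq D) //= eqxx big1 ?addr0 // => k /negbTE ->.
rewrite HD ?Dr //; apply: big1_seq => k /andP[_ kr]; case: eqP => // kD.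
by rewrite kD Dr in kr.
Qed.

Lemma sum_neq0 {K : fieldType} (T : eqType) (r : seq T) (F : T -> K) :
  \sum_(i <- r) F i != 0 -> exists2 i, i \in r & F i != 0.
Proof.
elim: r => [|i r IH]; first by rewrite big_nil eqxx.
rewrite big_cons; case: (F i =P 0) => [->|/eqP nz _]; last by exists i; rewrite ?mem_head.
by rewrite add0r => /IH [j jr nz]; exists j; rewrite // in_cons jr orbT.
Qed.

Lemma coefM_supp {K : fieldType} (f g : Alg K) w : (f * g)@_(mw w) != 0 ->
  exists w1 w2, [/\ w = w1 ++ w2, f@_(mw w1) != 0 & g@_(mw w2) != 0].
Proof.
rewrite mcoeffMl => /sum_neq0 [[w1] _] /sum_neq0 [[w2] _].
rewrite -/(mw w1) -/(mw w2) mwM mw_eq.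
rewrite mulrb; case: (w1 ++ w2 =P w) => [E|_]; last by rewrite eqxx.
move=> nz; exists w1, w2; split => //.
  by apply: contraNneq nz => ->; rewrite mul0r.
by apply: contraNneq nz => ->; rewrite mulr0.
Qed.

Lemma degle_mul {K : fieldType} n m (f g : Alg K) :
  degle n f -> degle m g -> degle (n + m) (f * g).
Proof.
move=> Hf Hg w /coefM_supp [w1 [w2 [-> /Hf h1 /Hg h2]]].
by rewrite size_cat leq_add.
Qed.

Lemma homog_mul {K : fieldType} n m (f g : Alg K) :
  homog n f -> homog m g -> homog (n + m) (f * g).
Proof.
move=> Hf Hg w /coefM_supp [w1 [w2 [-> /Hf h1 /Hg h2]]].
by rewrite size_cat h1 h2.
Qed.

Lemma coefM_top {K : fieldType} n m (f g : Alg K) w :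
  degle n f -> degle m g -> size w = (n + m)%N ->
  (f * g)@_(mw w) = f@_(mw (take n w)) * g@_(mw (drop n w)).
Proof.
move=> Hf Hg sw; rewrite mcoeffMl.
transitivity (\sum_(k1 <- finmap.enum_fset (msupp f)) \sum_(k2 <- finmap.enum_fset (msupp g))
   ((if k1 == mw (take n w) then f@_k1 else 0) *
    (if k2 == mw (drop n w) then g@_k2 else 0))).
  apply: eq_bigr => -[w1] _; apply: eq_bigr => -[w2] _.
  rewrite -/(mw w1) -/(mw w2) mwM !mw_eq.
  case: (f@_(mw w1) =P 0) => [->|/eqP f0].
    by rewrite !mul0r mul0rn; case: ifP; rewrite ?mul0r.
  case: (g@_(mw w2) =P 0) => [->|/eqP g0].
    by rewrite !mulr0 mul0rn; case: ifP; case: ifP; rewrite ?mulr0 ?mul0r.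
  have s1 := Hf _ f0; have s2 := Hg _ g0.
  case: eqP => [E|NE].
    have e1 : size w1 = n.
      by move: sw; rewrite -E size_cat => h; apply/eqP; rewrite eqn_leq s1 /=; lia.
    by rewrite -E take_size_cat // drop_size_cat // !eqxx mulr1n.
  rewrite mulr0n; case: eqP => [e1|]; last by rewrite mul0r.
  case: eqP => [e2|]; last by rewrite mulr0.
  by case: NE; rewrite e1 e2 cat_take_drop.
rewrite -big_distrlr /= !sum_single //; try exact: finmap.fset_uniq.
- by move=> h; apply: mcoeff_outdom.
- by move=> h; apply: mcoeff_outdom.
Qed.


Fixpoint Ww (ab : seq (nat * nat)) : seq bool :=
  match ab with
  | [::] => [::]
  | [:: (a, b)] => nseq a false ++ nseq b true
  | (a, b) :: rest => nseq a false ++ nseq b true ++ [:: true; false] ++ Ww rest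
  end.

Fixpoint num (w : seq bool) : nat :=
  match w with [::] => 0%N | b :: w' => (b * 2 ^ size w' + num w')%N end.

Definition key (w : seq bool) : nat := (2 ^ size w + num w)%N.

Lemma num_lt w : (num w < 2 ^ size w)%N.
Proof.
elim: w => [|b w IH] //=; rewrite expnS; case: b => /=; lia.
Qed.

Lemma num_cat s t : num (s ++ t) = (num s * 2 ^ size t + num t)%N.
Proof.
elim: s => [|b s IH] //=; rewrite IH size_cat expnD; lia.
Qed.

Lemma num_inj w w' : size w = size w' -> num w = num w' -> w = w'.
Proof.
elim: w w' => [|b w IH] [|b' w'] //= [es] e.
have l1 := num_lt w; have l2 := num_lt w'.
rewrite es in l1 e.
have eb : b = b'.
  by case: b b' e {IH} => [] [] //=; lia.
subst b'; congr (_ :: _); apply: IH => //; lia.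
Qed.

Lemma key_size w w' : (key w <= key w')%N -> (size w <= size w')%N.
Proof.
rewrite /key => h; have l1 := num_lt w; have l2 := num_lt w'.
rewrite leqNgt; apply/negP => lt.
have : (2 ^ (size w').+1 <= 2 ^ size w)%N by rewrite leq_exp2l.
rewrite expnS; lia.
Qed.

Lemma key_inj w w' : key w = key w' -> w = w'.
Proof.
move=> e; have es : size w = size w'.
  by apply/eqP; rewrite eqn_leq !key_size // e.
apply: num_inj => //; move: e; rewrite /key es; lia.
Qed.

Definition sumA (ab : seq (nat * nat)) := sumn (map fst ab).
Definition sumB (ab : seq (nat * nat)) := sumn (map snd ab).

Lemma Ww_cons a b c rest :
  Ww [:: (a, b), c & rest] = nseq a false ++ nseq b true ++ [:: true; false] ++ Ww (c :: rest).
Proof. by []. Qed.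

Lemma count_Ww ab : (0 < size ab)%N ->
  (count id (Ww ab) + sumA ab = count negb (Ww ab) + sumB ab)%N.
Proof.
elim: ab => [|[a b] rest IH] //= _.
case: rest IH => [|c rest] IH.
  rewrite /sumA /sumB /= !count_cat !count_nseq /=; lia.
rewrite !count_cat !count_nseq /=.
move: (IH isT); rewrite /sumA /sumB /=; lia.
Qed.

Lemma size_Ww ab : (0 < size ab)%N ->
  size (Ww ab) = (sumA ab + sumB ab + 2 * (size ab).-1)%N.
Proof.
elim: ab => [|[a b] rest IH] //= _.
case: rest IH => [|c rest] IH.
  by rewrite /sumA /sumB /= size_cat !size_nseq; lia.
rewrite !size_cat !size_nseq /=.
move: (IH isT); rewrite /sumA /sumB /= => ->; lia.
Qed.

Lemma nseq_split (x : bool) a a' s s' :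
  nseq a x ++ (~~ x :: s) = nseq a' x ++ (~~ x :: s') -> a = a' /\ s = s'.
Proof.
elim: a a' => [|a IH] [|a'] /=.
- by case.
- by case=> e; try clear IH; move: e; case: x.
- by case=> e; try clear IH; move: e; case: x.
- by case => /IH [-> ->].
Qed.

Lemma nseq_rcons (x : bool) b s : nseq b x ++ x :: s = x :: nseq b x ++ s.
Proof. by elim: b => //= b ->. Qed.

Lemma Ww_cons' a b c rest :
  Ww [:: (a, b), c & rest] = nseq a false ++ (~~ false :: (nseq b true ++ (~~ true :: Ww (c :: rest)))).
Proof. by rewrite Ww_cons /= nseq_rcons. Qed.

Lemma Ww_inj ab ab' : (0 < size ab)%N -> (0 < size ab')%N -> Ww ab = Ww ab' -> ab = ab'.
Proof.
elim: ab ab' => [|[a b] rest IH] // [|[a' b'] rest'] // _ _.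
case: rest IH => [|c rest] IH; case: rest' => [|c' rest'].
- move=> /= e; have := congr1 (count negb) e; have := congr1 (count id) e.
  by rewrite !count_cat !count_nseq /=; move=> h1 h2; congr [:: (_, _)]; lia.
- rewrite Ww_cons' /=; case: b => [|b] e.
    by have := congr1 (count id) e; rewrite cats0 !count_cat !count_nseq /=; lia.
  move: e; rewrite /= -/(nseq b true) -[true]/(~~ false) => /nseq_split [_ e].
  by have := congr1 (count negb) e; rewrite !count_cat !count_nseq /=; lia.
- rewrite Ww_cons' /=; case: b' => [|b'] e.
    by have := congr1 (count id) e; rewrite cats0 !count_cat !count_nseq /=; lia.
  move: e; rewrite /= -/(nseq b' true) -[true]/(~~ false) => /nseq_split [_ e].
  by have := congr1 (count negb) e; rewrite !count_cat !count_nseq /=; lia.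
- rewrite !Ww_cons' => /nseq_split [-> /nseq_split [-> /IH ->]] //.
Qed.


Definition mono {K : fieldType} (w : seq bool) : Alg K := << 1 *g mw w >>.

Lemma mono_coef {K : fieldType} w v : (mono w : Alg K)@_(mw v) = (w == v)%:R.
Proof. by rewrite /mono mcoeffU mw_eq. Qed.

Lemma mono_mul {K : fieldType} w v : (mono w : Alg K) * mono v = mono (w ++ v).
Proof. by rewrite /mono malgM_def fgmulUU mulr1 mwM. Qed.

Lemma mono_homog {K : fieldType} w : homog (size w) (mono w : Alg K).
Proof. by move=> v; rewrite mono_coef; case: (w =P v) => [->|]; rewrite ?eqxx. Qed.

Lemma emb_x {K : fieldType} : emb (fa_x K) = mono [:: false].
Proof. by rewrite /emb big_cons big_nil addr0. Qed.

Lemma emb_y {K : fieldType} : emb (fa_y K) = mono [:: true].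
Proof. by rewrite /emb big_cons big_nil addr0. Qed.

Lemma mono_nseq {K : fieldType} b n : (mono [:: b] : Alg K) ^+ n = mono (nseq n b).
Proof.
elim: n => [|n IH].
  rewrite expr0 /mono; apply: malgPw => w.
  by rewrite mcoeff1 mcoeffU -mw_nil mw_eq eq_sym.
by rewrite exprS IH mono_mul.
Qed.

Lemma emb_block {K : fieldType} a b :
  emb (fa_block K a b) = mono (nseq a false ++ nseq b true).
Proof. by rewrite /fa_block emb_mul !emb_pow emb_x emb_y !mono_nseq mono_mul. Qed.

Definition Cm {K : fieldType} : Alg K := mono [:: false; true] - mono [:: true; false].

Lemma emb_comm {K : fieldType} : emb (fa_comm K) = Cm.
Proof.
by rewrite /fa_comm emb_cat emb_scale !emb_mul emb_x emb_y !mono_mul scaleN1r.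
Qed.

Lemma Cm_coef {K : fieldType} v : (Cm : Alg K)@_(mw v) =
  ([:: false; true] == v)%:R - ([:: true; false] == v)%:R.
Proof. by rewrite /Cm mcoeffB !mono_coef. Qed.

Lemma Cm_homog {K : fieldType} : homog 2 (Cm : Alg K).
Proof.
move=> v; rewrite Cm_coef.
case: ([:: false; true] =P v) => [<-|] //.
by case: ([:: true; false] =P v) => [<-|] //; rewrite subrr eqxx.
Qed.

Definition Ua {K : fieldType} ab : Alg K := emb (u_ab K ab).

Lemma Ua_single {K : fieldType} a b : (Ua [:: (a, b)] : Alg K) = mono (nseq a false ++ nseq b true).
Proof. exact: emb_block. Qed.

Lemma Ua_cons {K : fieldType} a b c rest : (Ua [:: (a, b), c & rest] : Alg K) =
  mono (nseq a false ++ nseq b true) * (Cm * Ua (c :: rest)).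
Proof.
rewrite /Ua; change (u_ab K [:: (a,b), c & rest]) with
  (fa_mul (fa_block K a b) (fa_mul (fa_comm K) (u_ab K (c :: rest)))).
by rewrite emb_mul emb_block emb_mul emb_comm.
Qed.

Lemma num_step P c r R : size r = size R -> (num r <= num R)%N ->
  (c = [:: false; true] \/ c = [:: true; false]) ->
  (num (P ++ c ++ r) <= num (P ++ [:: true; false] ++ R))%N.
Proof.
move=> es le hc; rewrite !num_cat !size_cat es.
have l1 := num_lt r; have l2 := num_lt R; rewrite es in l1.
case: hc => -> /=; rewrite !expnS; nia.
Qed.

Lemma Ua_props {K : fieldType} ab : (0 < size ab)%N ->
  [/\ homog (size (Ww ab)) (Ua ab : Alg K),
      forall w, (Ua ab : Alg K)@_(mw w) != 0 -> (num w <= num (Ww ab))%N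
    & (Ua ab : Alg K)@_(mw (Ww ab)) = (-1) ^+ (size ab).-1].
Proof.
elim: ab => [|[a b] rest IH] // _.
case: rest IH => [|c rest] IH.
  rewrite Ua_single /=; split.
  - exact: mono_homog.
  - by move=> w; rewrite mono_coef; case: (nseq a false ++ nseq b true =P w) => [->|]; rewrite ?eqxx.
  - by rewrite mono_coef eqxx.
have [H1 H2 H3] := IH isT.
set P := nseq a false ++ nseq b true.
have hP : homog (size P) (mono P : Alg K) := @mono_homog K P.
have hC := homog_mul (@Cm_homog K) H1.
have HW : Ww [:: (a, b), c & rest] = P ++ [:: true; false] ++ Ww (c :: rest) by rewrite Ww_cons catA.
have hU : homog (size (Ww [:: (a, b), c & rest])) (Ua [:: (a, b), c & rest] : Alg K).
  rewrite Ua_cons HW size_cat; apply: homog_mul => //.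
have coefE : forall w, size w = size (Ww [:: (a, b), c & rest]) ->
   (Ua [:: (a, b), c & rest] : Alg K)@_(mw w) =
   (mono P : Alg K)@_(mw (take (size P) w)) *
   ((Cm : Alg K)@_(mw (take 2 (drop (size P) w))) *
    (Ua (c :: rest) : Alg K)@_(mw (drop 2 (drop (size P) w)))).
  move=> w sw; rewrite Ua_cons (coefM_top (homog_degle hP) (homog_degle hC)).
    rewrite (coefM_top (homog_degle (@Cm_homog K)) (homog_degle H1)) //.
    by rewrite size_drop sw HW !size_cat /=; lia.
  by rewrite sw HW !size_cat.
split => //.
- move=> w nz; have sw := hU _ nz.
  move: nz; rewrite coefE // mono_coef.
  case: (P =P _) => [eP|]; last by rewrite mul0r eqxx.
  set v := drop (size P) w.
  have ew : w = P ++ take 2 v ++ drop 2 v by rewrite cat_take_drop eP cat_take_drop.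
  rewrite mul1r Cm_coef.
  case: ((Ua (c :: rest) : Alg K)@_(mw (drop 2 v)) =P 0) => [->|/eqP nzr]; first by rewrite mulr0 eqxx.
  move=> nzl; rewrite ew HW; apply: num_step.
  + apply: H1; exact: nzr.
  + exact: H2.
  + move: nzl; case: ([:: false; true] =P take 2 v) => [<-|_]; first by left.
    case: ([:: true; false] =P take 2 v) => [<-|_]; first by right.
    by rewrite subrr mul0r eqxx.
- rewrite coefE // mono_coef HW take_size_cat // drop_size_cat // eqxx mul1r.
  rewrite Cm_coef (@take_size_cat _ 2) // (@drop_size_cat _ 2) // H3 /= sub0r mulr1n mulN1r.
  by rewrite exprS mulN1r.
Qed.


Lemma argmax_seq (T : eqType) (s : seq T) (g : T -> nat) : s != [::] ->
  exists2 t0, t0 \in s & forall t, t \in s -> (g t <= g t0)%N.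
Proof.
elim: s => [|x s IH] // _.
case: s IH => [|y s] IH.
  by exists x; rewrite ?mem_head // => t; rewrite mem_seq1 => /eqP ->.
have [t1 t1s H1] := IH isT.
case: (leqP (g x) (g t1)) => le.
  exists t1; first by rewrite in_cons t1s orbT.
  by move=> t; rewrite in_cons => /orP [/eqP ->|/H1].
exists x; first exact: mem_head.
move=> t; rewrite in_cons => /orP [/eqP ->//|/H1 h]; lia.
Qed.

Lemma lexmax {K : fieldType} (T : eqType) (s : seq T) (c mu : T -> K)
  (E : T -> Alg K) (F : T -> seq (nat * nat)) :
  uniq s -> s != [::] ->
  (forall t, t \in s -> (c t != 0) && (mu t != 0)) ->
  (forall t, t \in s -> (0 < size (F t))%N) ->
  (forall t, t \in s -> degle (size (Ww (F t))) (E t)) ->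
  (forall t, t \in s -> forall w, size w = size (Ww (F t)) ->
      (E t)@_(mw w) = mu t * (Ua (F t) : Alg K)@_(mw w)) ->
  {in s &, injective F} ->
  exists2 t0, t0 \in s &
    (forall t, t \in s -> (size (Ww (F t)) <= size (Ww (F t0)))%N) /\
    (\sum_(t <- s) c t *: E t)@_(mw (Ww (F t0))) != 0.
Proof.
move=> us sne Hc Hs Hd Ht Hinj.
have [t0 t0s Hmax] := argmax_seq (fun t => key (Ww (F t))) sne.
have Hsz : forall t, t \in s -> (size (Ww (F t)) <= size (Ww (F t0)))%N.
  by move=> t ts; apply: key_size; apply: Hmax.
exists t0 => //; split => //.
rewrite raddf_sum /= (bigD1_seq t0) //= big1_seq ?addr0.
  rewrite mcoeffZ Ht //; have [_ _ ->] := @Ua_props K _ (Hs _ t0s).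
  have /andP [c0 m0] := Hc _ t0s.
  by rewrite !mulf_neq0 // expf_neq0 // oppr_eq0 oner_eq0.
move=> t /andP [tt0 ts]; rewrite mcoeffZ.
case: ((E t)@_(mw (Ww (F t0))) =P 0) => [->|/eqP nz]; first by rewrite mulr0.
have le1 := Hd _ ts _ nz.
have eqs : size (Ww (F t0)) = size (Ww (F t)).
  by apply/eqP; rewrite eqn_leq le1 Hsz.
rewrite Ht // in nz *.
case: ((Ua (F t) : Alg K)@_(mw (Ww (F t0))) =P 0) => [->|/eqP nz2]; first by rewrite !mulr0.
have [_ H2 _] := @Ua_props K _ (Hs _ ts).
have l1 := H2 _ nz2.
have l2 := Hmax _ ts; rewrite /key eqs in l2.
have eW : Ww (F t0) = Ww (F t) by apply: num_inj => //; lia.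
have eF := Ww_inj (Hs _ t0s) (Hs _ ts) eW.
by rewrite (Hinj _ _ ts t0s (esym eF)) eqxx in tt0.
Qed.


Lemma scaleU {K : fieldType} c x (k : {fmonom bool}) :
  c *: (<< x *g k >> : Alg K) = << c * x *g k >>.
Proof. by apply/malgP => k'; rewrite mcoeffZ !mcoeffU mulrnAr. Qed.

Lemma mulr_C {K : fieldType} (g : Alg K) c : g * c%:MP = c *: g.
Proof.
rewrite {1 2}(monalgE g) mulr_suml scaler_sumr; apply: eq_bigr => k _.
rewrite malgM_def fgmulUU scaleU mulrC.
by congr (<< _ *g _ >>); apply: mulm1.
Qed.

Lemma scalerAr' {K : fieldType} (x y : Alg K) c : x * (c *: y) = c *: (x * y).
Proof. by rewrite -mul_malgC mulrA mulr_C scalerAl. Qed.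

Definition SWe {K : fieldType} (f g : fa K) (w : seq bool) : Alg K :=
  foldr (fun b acc => (if b then emb g else emb f) * acc) 1 w.

Lemma emb_sw {K : fieldType} (f g : fa K) w : emb (subst_word f g w) = SWe f g w.
Proof.
elim: w => [|b w IH] /=; first exact: emb_one.
by rewrite emb_mul IH; case: b.
Qed.

Lemma SWe_cat {K : fieldType} (f g : fa K) w1 w2 : SWe f g (w1 ++ w2) = SWe f g w1 * SWe f g w2.
Proof. elim: w1 => [|b w IH] /=; first by rewrite mul1r. by rewrite IH mulrA. Qed.

Definition Phi {K : fieldType} (f g : fa K) (u : fa K) : Alg K := emb (fa_subst f g u).

Lemma PhiE {K : fieldType} (f g : fa K) u : Phi f g u = \sum_(t <- u) t.1 *: SWe f g t.2.
Proof. by rewrite /Phi /fa_subst emb_flatten; apply: eq_bigr => t _; rewrite emb_scale emb_sw. Qed.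

Lemma Phi_cat {K : fieldType} (f g : fa K) u v : Phi f g (u ++ v) = Phi f g u + Phi f g v.
Proof. by rewrite !PhiE big_cat. Qed.

Lemma Phi_scale {K : fieldType} (f g : fa K) c u : Phi f g (fa_scale c u) = c *: Phi f g u.
Proof.
rewrite !PhiE /fa_scale big_map scaler_sumr; apply: eq_bigr => t _.
by rewrite scalerA.
Qed.

Lemma Phi_mul {K : fieldType} (f g : fa K) u v : Phi f g (fa_mul u v) = Phi f g u * Phi f g v.
Proof.
rewrite !PhiE /fa_mul big_allpairs_dep mulr_suml; apply: eq_bigr => s _.
rewrite mulr_sumr; apply: eq_bigr => t _ /=.
by rewrite SWe_cat scalerAr' -!scalerAl scalerA mulrC.
Qed.

Lemma Phi_one {K : fieldType} (f g : fa K) : Phi f g (fa_one K) = 1.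
Proof. by rewrite PhiE big_cons big_nil addr0 scale1r. Qed.

Lemma Phi_x {K : fieldType} (f g : fa K) : Phi f g (fa_x K) = emb f.
Proof. by rewrite PhiE big_cons big_nil addr0 scale1r /= mulr1. Qed.

Lemma Phi_y {K : fieldType} (f g : fa K) : Phi f g (fa_y K) = emb g.
Proof. by rewrite PhiE big_cons big_nil addr0 scale1r /= mulr1. Qed.

Lemma Phi_pow {K : fieldType} (f g : fa K) u n : Phi f g (fa_pow u n) = Phi f g u ^+ n.
Proof.
elim: n => [|n IH]; first by rewrite expr0 Phi_one.
by rewrite exprS /= Phi_mul IH.
Qed.

Definition Pp {K : fieldType} (p : {poly K}) : Alg K :=
  \sum_(i <- iota 0 (size p)) p`_i *: mono (nseq i true).

Lemma emb_poly {K : fieldType} (p : {poly K}) : emb (poly_y p) = Pp p.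
Proof.
rewrite /poly_y emb_flatten; apply: eq_bigr => i _.
by rewrite emb_scale emb_pow emb_y mono_nseq.
Qed.

Lemma Pp_comm {K : fieldType} (p : {poly K}) : Pp p * mono [:: true] = mono [:: true] * Pp p.
Proof.
rewrite /Pp mulr_suml mulr_sumr; apply: eq_bigr => i _.
rewrite -scalerAl scalerAr' !mono_mul; congr (_ *: mono _).
by elim: i => //= i ->.
Qed.


Definition fF {K : fieldType} (alpha : K) (p : {poly K}) : fa K :=
  fa_add (fa_scale alpha (fa_x K)) (poly_y p).
Definition gG {K : fieldType} (beta gamma : K) : fa K :=
  fa_add (fa_scale beta (fa_y K)) (fa_const gamma).

Lemma emb_fF {K : fieldType} (alpha : K) p : emb (fF alpha p) = alpha *: mono [:: false] + Pp p.
Proof. by rewrite /fF emb_cat emb_scale emb_x emb_poly. Qed.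

Definition cst {K : fieldType} (c : K) : Alg K := << c *g mw [::] >>.

Lemma cst_mull {K : fieldType} (c : K) (g : Alg K) : cst c * g = c *: g.
Proof. rewrite /cst mw_nil. exact: mul_malgC. Qed.

Lemma cst_mulr {K : fieldType} (c : K) (g : Alg K) : g * cst c = c *: g.
Proof. rewrite /cst mw_nil. exact: mulr_C. Qed.

Lemma emb_gG {K : fieldType} (beta gamma : K) : emb (gG beta gamma) = beta *: mono [:: true] + cst gamma.
Proof. by rewrite /gG emb_cat emb_scale emb_y /emb /fa_const big_cons big_nil addr0. Qed.

Lemma zid (V : zmodType) (a b c d e : V) : a + b + (c + d) - (e + c + (b + d)) = a - e.
Proof. by rewrite -(addrA a) -(addrA e) (addrCA c b) [e + _]addrC addrKA. Qed.

Lemma comm_abs {K : fieldType} (R : lalgType K) (X Y P C : R) (alpha beta gamma : K) :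
  P * Y = Y * P -> (forall g, C * g = gamma *: g) -> (forall g, g * C = gamma *: g) ->
  (forall (x y : R) c, x * (c *: y) = c *: (x * y)) ->
  (alpha *: X + P) * (beta *: Y + C) - (beta *: Y + C) * (alpha *: X + P) =
  (alpha * beta) *: (X * Y - Y * X).
Proof.
move=> hPY hCl hCr hAr.
rewrite !mulrDl !mulrDr -!scalerAl !hAr !hCl !hCr -hPY !scalerA (mulrC beta alpha).
by rewrite scalerBr zid.
Qed.

Lemma Phi_comm {K : fieldType} (alpha beta gamma : K) p :
  Phi (fF alpha p) (gG beta gamma) (fa_comm K) = (alpha * beta) *: Cm.
Proof.
rewrite /fa_comm Phi_cat Phi_scale !Phi_mul Phi_x Phi_y emb_fF emb_gG scaleN1r.
have e1 : (mono [:: false; true] : Alg K) = mono [:: false] * mono [:: true] by rewrite mono_mul.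
have e2 : (mono [:: true; false] : Alg K) = mono [:: true] * mono [:: false] by rewrite mono_mul.
rewrite /Cm e1 e2.
apply: comm_abs; [exact: Pp_comm | exact: cst_mull | exact: cst_mulr | exact: scalerAr'].
Qed.


Definition TP {K : fieldType} n (f g : Alg K) (lam : K) :=
  [/\ degle n f, homog n g & forall w, size w = n -> f@_(mw w) = lam * g@_(mw w)].

Lemma TP_mul {K : fieldType} n m (f f0 g g0 : Alg K) l1 l2 :
  TP n f f0 l1 -> TP m g g0 l2 -> TP (n + m) (f * g) (f0 * g0) (l1 * l2).
Proof.
move=> [d1 h1 e1] [d2 h2 e2]; split.
- exact: degle_mul.
- exact: homog_mul.
- move=> w sw; rewrite (coefM_top d1 d2 sw) (coefM_top (homog_degle h1) (homog_degle h2) sw).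
  rewrite e1 ?e2; first by rewrite mulrACA.
  + by rewrite size_drop sw; lia.
  + by rewrite size_take sw; case: ltnP => //; lia.
Qed.

Lemma coef1 {K : fieldType} w : (1 : Alg K)@_(mw w) = (w == [::])%:R.
Proof. by rewrite mcoeff1 -mw_nil mw_eq. Qed.

Lemma TP_one {K : fieldType} : TP 0 (1 : Alg K) 1 1.
Proof.
split.
- by move=> w; rewrite coef1; case: (w =P [::]) => [->|] //; rewrite eqxx.
- by move=> w; rewrite coef1; case: (w =P [::]) => [->|] //; rewrite eqxx.
- by move=> w _; rewrite mul1r.
Qed.

Lemma TP_pow {K : fieldType} n (f g : Alg K) lam a :
  TP n f g lam -> TP (n * a) (f ^+ a) (g ^+ a) (lam ^+ a).
Proof.
move=> H; elim: a => [|a IH]; first by rewrite muln0 !expr0; exact: TP_one.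
by rewrite mulnS !exprS; apply: TP_mul.
Qed.

Lemma TP_eq {K : fieldType} n n' (f g g' : Alg K) lam :
  n = n' -> g = g' -> TP n f g lam -> TP n' f g' lam.
Proof. by move=> -> ->. Qed.

Lemma mono_nseq_pow {K : fieldType} k a :
  (mono (nseq k true) : Alg K) ^+ a = mono (nseq (k * a) true).
Proof.
elim: a => [|a IH]; first by rewrite expr0 muln0 -mono_nseq expr0.
by rewrite exprS IH mono_mul mulnS nseqD.
Qed.

Lemma Pp_coef {K : fieldType} (p : {poly K}) w :
  (Pp p)@_(mw w) = \sum_(i <- iota 0 (size p)) p`_i * (nseq i true == w)%:R.
Proof.
rewrite /Pp raddf_sum; apply: eq_bigr => i _.
by rewrite /= mcoeffZ mono_coef.
Qed.

Lemma mcoeffD_neq0 {K : fieldType} (f g : Alg K) w :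
  (f + g)@_(mw w) != 0 -> f@_(mw w) != 0 \/ g@_(mw w) != 0.
Proof.
rewrite mcoeffD; case: (f@_(mw w) =P 0) => [->|/eqP]; last by left.
by rewrite add0r; right.
Qed.

Lemma TP_F {K : fieldType} (alpha : K) (p : {poly K}) :
  (2 <= (size p).-1)%N ->
  TP (size p).-1 (emb (fF alpha p)) (mono (nseq (size p).-1 true)) p`_(size p).-1.
Proof.
move=> hk; have sp : size p = ((size p).-1).+1.
  by move: hk; case: (size p).
set k := (size p).-1 in hk sp *.
rewrite emb_fF; split.
- move=> w /mcoeffD_neq0 [].
    rewrite mcoeffZ mono_coef; case: ([:: false] =P w) => [<-|]; first by move=> _ /=; lia.
    by rewrite mulr0 eqxx.
  rewrite Pp_coef => /sum_neq0 [i]; rewrite mem_iota add0n => /andP [_ ilt].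
  case: (nseq i true =P w) => [<-|]; last by rewrite mulr0 eqxx.
  by rewrite size_nseq; lia.
- by have := @mono_homog K (nseq k true); rewrite size_nseq.
- move=> w sw; rewrite mcoeffD mcoeffZ !mono_coef Pp_coef.
  case: ([:: false] =P w) => [ew|_]; first by rewrite -ew /= in sw; lia.
  rewrite mulr0 add0r (bigD1_seq k) /=.
  + rewrite big1 ?addr0 // => i ik.
    case: (nseq i true =P w) => [ew|]; last by rewrite mulr0.
    by move: ik; rewrite -ew size_nseq in sw; rewrite sw eqxx.
  + by rewrite mem_iota add0n /= sp.
  + exact: iota_uniq.
Qed.

Lemma TP_G {K : fieldType} (beta gamma : K) :
  TP 1 (emb (gG beta gamma)) (mono [:: true]) beta.
Proof.
rewrite emb_gG; split.
- move=> w /mcoeffD_neq0 [].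
    by rewrite mcoeffZ mono_coef; case: ([:: true] =P w) => [<-|] //; rewrite mulr0 eqxx.
  by rewrite /cst mcoeffU mw_eq; case: ([::] =P w) => [<-|] //; rewrite mulr0n eqxx.
- exact: mono_homog.
- move=> w sw; rewrite mcoeffD mcoeffZ /cst mcoeffU mw_eq.
  by case: ([::] =P w) => [ew|_]; [rewrite -ew in sw | rewrite mulr0n addr0].
Qed.

Lemma TP_C {K : fieldType} (lam : K) : TP 2 (lam *: Cm) Cm lam.
Proof.
split.
- move=> w; rewrite mcoeffZ => h.
  have h2 : (Cm : Alg K)@_(mw w) != 0 by apply: contraNneq h => ->; rewrite mulr0.
  by rewrite (@Cm_homog K w h2).
- exact: Cm_homog.
- by move=> w _; rewrite mcoeffZ.
Qed.


Definition Fm (k : nat) (ab : seq (nat * nat)) : seq (nat * nat) :=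
  map (fun q => (0%N, k * q.1 + q.2)%N) ab.

Fixpoint muf {K : fieldType} (pk beta alpha : K) (ab : seq (nat * nat)) : K :=
  match ab with
  | [::] => 1
  | [:: (a, b)] => pk ^+ a * beta ^+ b
  | (a, b) :: rest => pk ^+ a * beta ^+ b * (alpha * beta * muf pk beta alpha rest)
  end.

Lemma Phi_block {K : fieldType} (f g : fa K) a b :
  Phi f g (fa_block K a b) = emb f ^+ a * emb g ^+ b.
Proof. by rewrite /fa_block Phi_mul !Phi_pow Phi_x Phi_y. Qed.

Lemma rho_TP {K : fieldType} (alpha beta gamma : K) (p : {poly K}) :
  (2 <= (size p).-1)%N -> forall ab, (0 < size ab)%N ->
  TP (size (Ww (Fm (size p).-1 ab))) (Phi (fF alpha p) (gG beta gamma) (u_ab K ab))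
     (Ua (Fm (size p).-1 ab)) (muf p`_(size p).-1 beta alpha ab).
Proof.
move=> hk; set k := (size p).-1.
elim => [|[a b] rest IH] // _.
have TB : TP (k * a + b) (emb (fF alpha p) ^+ a * emb (gG beta gamma) ^+ b)
   (mono (nseq (k * a + b) true)) (p`_k ^+ a * beta ^+ b).
  have := TP_mul (@TP_pow K _ _ _ _ a (TP_F alpha hk)) (@TP_pow K _ _ _ _ b (TP_G beta gamma)).
  apply: TP_eq; first by rewrite mul1n.
  by rewrite mono_nseq_pow mono_nseq mono_mul nseqD.
case: rest IH => [|c rest] IH.
  change (u_ab K [:: (a, b)]) with (fa_block K a b); rewrite Phi_block.
  apply: TP_eq TB; first by rewrite /= size_nseq.
  by change (Fm k [:: (a,b)]) with [:: (0%N, k*a+b)%N]; rewrite Ua_single.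
change (u_ab K [:: (a, b), c & rest]) with
  (fa_mul (fa_block K a b) (fa_mul (fa_comm K) (u_ab K (c :: rest)))).
rewrite Phi_mul Phi_block Phi_mul Phi_comm.
have := TP_mul TB (TP_mul (TP_C (alpha * beta)) (IH isT)).
have E1 : Fm k [:: (a, b), c & rest] = [:: (0%N, k * a + b)%N, (0%N, k * c.1 + c.2)%N & Fm k rest] by [].
have E2 : Fm k (c :: rest) = (0%N, k * c.1 + c.2)%N :: Fm k rest by [].
apply: TP_eq.
  by rewrite E1 Ww_cons -E2 !size_cat !size_nseq add0n.
by rewrite E1 Ua_cons -E2.
Qed.

Lemma emb_lincomb {K : fieldType} (s : seq (K * seq (nat * nat))) :
  emb (lincomb_uab s) = \sum_(t <- s) t.1 *: Ua t.2.
Proof. by rewrite /lincomb_uab emb_flatten; apply: eq_bigr => t _; rewrite emb_scale. Qed.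

Lemma Phi_flatten {K : fieldType} (f g : fa K) (T : Type) (s : seq T) (F : T -> fa K) :
  Phi f g (flatten (map F s)) = \sum_(t <- s) Phi f g (F t).
Proof.
elim: s => [|t s IH]; first by rewrite big_nil PhiE big_nil.
by rewrite /= Phi_cat IH big_cons.
Qed.

Lemma rho_lincomb {K : fieldType} (alpha beta gamma : K) p (s : seq (K * seq (nat * nat))) :
  emb (rho_tri alpha beta gamma p (lincomb_uab s)) =
  \sum_(t <- s) t.1 *: Phi (fF alpha p) (gG beta gamma) (u_ab K t.2).
Proof.
change (emb (rho_tri alpha beta gamma p (lincomb_uab s))) with
  (Phi (fF alpha p) (gG beta gamma) (lincomb_uab s)).
by rewrite /lincomb_uab Phi_flatten; apply: eq_bigr => t _; rewrite Phi_scale.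
Qed.


Lemma fa_coef_in {K : fieldType} (u : fa K) w : fa_coef u w != 0 -> exists2 t, t \in u & t.2 = w.
Proof.
rewrite /fa_coef big_mkcond /= => /sum_neq0 [t tu].
by case: (t.2 =P w) => [<-|]; [exists t | rewrite eqxx].
Qed.

Lemma fa_deg_eq {K : fieldType} (u : fa K) D :
  (forall w, fa_coef u w != 0 -> (size w <= D)%N) ->
  (exists w, size w = D /\ fa_coef u w != 0) -> fa_deg u = D.
Proof.
move=> Hle [w [sw nz]]; apply/eqP; rewrite eqn_leq; apply/andP; split.
  by apply/bigmax_leqP_seq => t _ /Hle.
have [t tu tw] := fa_coef_in nz.
rewrite -sw -tw /fa_deg; apply: (@leq_bigmax_seq _ u (fun t : K * seq bool => fa_coef u t.2 != 0) (fun t : K * seq bool => size t.2)) => //.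
by rewrite tw.
Qed.

Lemma hom_coef {K : fieldType} (u : fa K) d w :
  fa_coef (hom_comp u d) w = if size w == d then fa_coef u w else 0.
Proof.
rewrite /fa_coef /hom_comp big_filter_cond.
case: (size w =P d) => [sw|nsw].
  by apply: eq_bigl => t; case: (t.2 =P w) => [->|]; rewrite ?sw ?eqxx ?andbF.
rewrite big_pred0 // => t; case: (t.2 =P w) => [tw|]; last by rewrite andbF.
by rewrite tw; case: (size w =P d).
Qed.

Lemma inV_emb {K : fieldType} (v : fa K) : inV v ->
  exists n (c : nat -> K), emb v = \sum_(i <- iota 0 n) c i *: Cm ^+ i.
Proof.
move=> [n [c e]]; exists n, c; apply: malgPw => w; rewrite emb_coef e -emb_coef.
rewrite emb_flatten; congr (_ @_ _); apply: eq_bigr => i _.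
by rewrite emb_scale emb_pow emb_comm.
Qed.

Lemma Cm_pow_bal {K : fieldType} i w :
  ((Cm : Alg K) ^+ i)@_(mw w) != 0 -> count id w = count negb w.
Proof.
elim: i w => [|i IH] w.
  by rewrite expr0 coef1; case: (w =P [::]) => [->|] //; rewrite eqxx.
rewrite exprS => /coefM_supp [w1 [w2 [-> h1 /IH h2]]].
move: h1; rewrite Cm_coef !count_cat h2.
case: ([:: false; true] =P w1) => [<-|_] //.
case: ([:: true; false] =P w1) => [<-|_] //.
by rewrite subrr eqxx.
Qed.

Lemma uniq_map_inj (T1 T2 : eqType) (f : T1 -> T2) (s : seq T1) :
  uniq (map f s) -> {in s &, injective f}.
Proof.
elim: s => [|x s IH] //= /andP [nx us] t t'; rewrite !in_cons.
move=> /orP [/eqP ->|ts] /orP [/eqP ->|t's] //= e.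
- by move: nx; rewrite e map_f.
- by move: nx; rewrite -e map_f.
- exact: IH.
Qed.

Lemma sumA_Fm k ab : sumA (Fm k ab) = 0%N.
Proof. by elim: ab => // q ab IH; rewrite /sumA /= -/(sumA _) IH. Qed.

Lemma sumB_Fm k ab : sumB (Fm k ab) = (k * sumA ab + sumB ab)%N.
Proof.
elim: ab => [|q ab IH]; first by rewrite /sumB /sumA /= muln0.
move: IH; rewrite /sumB /sumA /= => ->; lia.
Qed.

Lemma Fm_id k ab : sumA ab = 0%N -> Fm k ab = ab.
Proof.
elim: ab => // [[a b] ab IH]; rewrite /sumA /= -/(sumA _) => h.
have ha : a = 0%N by lia.
by rewrite ha IH; [rewrite muln0 | lia].
Qed.

Lemma sumA_all ab : all (fun q => q.1 == 0%N) ab -> sumA ab = 0%N.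
Proof. by elim: ab => // [[a b] ab IH] /= /andP [/eqP -> /IH]; rewrite /sumA /= -/(sumA _) => ->. Qed.

Lemma sumA_has ab : has (fun q => q.1 != 0%N) ab -> (0 < sumA ab)%N.
Proof.
elim: ab => // [[a b] ab IH] /= /orP [h|/IH h]; rewrite /sumA /= -/(sumA _); lia.
Qed.

Lemma b_le_sumB ab a b : (a, b) \in ab -> (b <= sumB ab)%N.
Proof.
elim: ab => // q ab IH; rewrite in_cons /sumB /= -/(sumB _) => /orP [/eqP <-|/IH] /=; lia.
Qed.

Lemma Fm_inj k ab ab' : (0 < k)%N ->
  (forall q, q \in ab -> (q.2 < k)%N) -> (forall q, q \in ab' -> (q.2 < k)%N) ->
  Fm k ab = Fm k ab' -> ab = ab'.
Proof.
move=> k0; elim: ab ab' => [|[a b] ab IH] [|[a' b'] ab'] //= h h' [e1 e2].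
have hb : (b < k)%N by apply: (h (a, b)); rewrite mem_head.
have hb' : (b' < k)%N by apply: (h' (a', b')); rewrite mem_head.
have em : b = b'.
  have := congr1 (modn^~ k) e1; rewrite /= ![(k * _)%N]mulnC !modnMDl !modn_small //.
have ed : a = a'.
  have := congr1 (divn^~ k) e1; rewrite /= ![(k * _)%N]mulnC !divnMDl // !divn_small //.
  by rewrite !addn0.
rewrite em ed (IH ab') // => q qi.
  by apply: h; rewrite in_cons qi orbT.
by apply: h'; rewrite in_cons qi orbT.
Qed.

Lemma muf_neq0 {K : fieldType} (pk beta alpha : K) ab :
  pk != 0 -> beta != 0 -> alpha != 0 -> muf pk beta alpha ab != 0.
Proof.
move=> h1 h2 h3; elim: ab => [|[a b] ab IH] /=; first exact: oner_neq0.
case: ab IH => [|c ab] IH; first by rewrite mulf_neq0 // expf_neq0.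
by rewrite !mulf_neq0 // expf_neq0.
Qed.

Local Close Scope ring_scope.

Lemma deg_lemma {K : fieldType} (s : seq (K * seq (nat * nat))) (mu : K * seq (nat * nat) -> K)
  (E : K * seq (nat * nat) -> Alg K) (F : K * seq (nat * nat) -> seq (nat * nat)) :
  uniq s -> s != [::] ->
  (forall t, t \in s -> (t.1 != 0%R) && (mu t != 0%R)) ->
  (forall t, t \in s -> (0 < size (F t))%N) ->
  (forall t, t \in s -> degle (size (Ww (F t))) (E t)) ->
  (forall t, t \in s -> forall w, size w = size (Ww (F t)) ->
      (E t)@_(mw w) = (mu t * (Ua (F t) : Alg K)@_(mw w))%R) ->
  {in s &, injective F} ->
  forall v : fa K, emb v = (\sum_(t <- s) t.1 *: E t)%R ->
  exists2 t0, t0 \in s & [/\ forall t, t \in s -> (size (Ww (F t)) <= size (Ww (F t0)))%N,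
      fa_deg v = size (Ww (F t0)) & fa_coef v (Ww (F t0)) != 0%R].
Proof.
move=> us sne Hc Hs Hd Ht Hinj v ev.
have [t0 t0s [Hmax Hnz]] := lexmax (c := fst) us sne Hc Hs Hd Ht Hinj.
have Hcv : fa_coef v (Ww (F t0)) != 0%R by rewrite -emb_coef ev.
exists t0 => //; split => //.
apply: fa_deg_eq; last by exists (Ww (F t0)).
move=> w; rewrite -emb_coef ev raddf_sum => /sum_neq0 [t ts]; rewrite /= mcoeffZ => nz.
have nz2 : (E t)@_(mw w) != 0%R by apply: contraNneq nz => ->; rewrite GRing.mulr0.
exact: leq_trans (Hd _ ts _ nz2) (Hmax _ ts).
Qed.


Unset Implicit Arguments.

Theorem corollary2p4 (K : fieldType) (s : seq (K * seq (nat * nat)))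
  (alpha beta gamma : K) (p : {poly K}) :
  uniq [seq t.2 | t <- s] ->
  all (fun t => t.1 != 0%R) s ->
  all (fun t => 0 < size t.2) s ->
  ~ inV (lincomb_uab s) ->
  alpha != 0%R -> beta != 0%R -> 2 <= (size p).-1 ->
  ((all (fun t => all (fun ab => ab.1 == 0) t.2) s) ->
     fa_deg (lincomb_uab s) = fa_deg (rho_tri alpha beta gamma p (lincomb_uab s)))
  /\
  ((has (fun t => has (fun ab => ab.1 != 0) t.2) s) ->
     fa_deg (lincomb_uab s) < (size p).-1 ->
     exists d, (size p).-1 <= d /\
       ~ inV (hom_comp (rho_tri alpha beta gamma p (lincomb_uab s)) d)).
Proof.
move=> us hc hs notV ha hb hk.
have sne : s != [::].
  apply/eqP => s0; apply: notV; rewrite s0; exists 0%N, (fun _ => 0%R) => w //.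
have us' : uniq s := map_uniq us.
have hinj := uniq_map_inj us.
have hcs : forall t, t \in s -> (t.1 != 0%R) && (1 != 0 :> K)%R.
  by move=> t ts; rewrite (allP hc t ts) GRing.oner_neq0.
have hss : forall t, t \in s -> (0 < size t.2)%N by move=> t ts; exact: (allP hs t ts).
have [t0u t0us [Hmu Hdu Hcu]] := deg_lemma (mu := fun _ => 1%R) (E := fun t => Ua t.2)
   (F := snd) us' sne hcs hss
   (fun t ts => homog_degle (let: And3 h _ _ := @Ua_props K _ (hss t ts) in h))
   (fun t ts w _ => esym (GRing.mul1r _)) hinj (emb_lincomb s).
set k := (size p).-1 in hk *.
have k0 : (0 < k)%N by apply: leq_trans hk.
have pk0 : (p`_k)%R != 0%R.
  have p0 : p != 0%R by apply/eqP => p0; move: hk; rewrite /k p0 size_poly0.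
  by rewrite /k -lead_coefE lead_coef_eq0.
have hcr : forall t, t \in s -> (t.1 != 0%R) && (muf (p`_k)%R beta alpha t.2 != 0%R).
  by move=> t ts; rewrite (allP hc t ts) muf_neq0.
have hsr : forall t, t \in s -> (0 < size (Fm k t.2))%N.
  by move=> t ts; rewrite size_map; exact: hss.
have hdr : forall t, t \in s -> degle (size (Ww (Fm k t.2)))
      (Phi (fF alpha p) (gG beta gamma) (u_ab K t.2)).
  by move=> t ts; have [h _ _] := rho_TP alpha beta gamma hk (hss t ts).
have htr : forall t, t \in s -> forall w, size w = size (Ww (Fm k t.2)) ->
      (Phi (fF alpha p) (gG beta gamma) (u_ab K t.2))@_(mw w) =
      (muf (p`_k)%R beta alpha t.2 * (Ua (Fm k t.2) : Alg K)@_(mw w))%R.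
  by move=> t ts; have [_ _ h] := rho_TP alpha beta gamma hk (hss t ts).
split.
- move=> hall.
  have hid : forall t, t \in s -> Fm k t.2 = t.2.
    by move=> t ts; apply: Fm_id; apply: sumA_all; exact: (allP hall t ts).
  have hinjr : {in s &, injective (fun t => Fm k t.2)}.
    by move=> t t' ts t's /=; rewrite (hid t ts) (hid t' t's); apply: hinj.
  have [t0r t0rs [Hmr Hdr Hcr]] := deg_lemma (mu := fun t => muf (p`_k)%R beta alpha t.2)
     (E := fun t => Phi (fF alpha p) (gG beta gamma) (u_ab K t.2)) (F := fun t => Fm k t.2)
     us' sne hcr hsr hdr htr hinjr
     (rho_lincomb alpha beta gamma p s).
  rewrite Hdu Hdr; apply/eqP; rewrite eqn_leq.
  have := Hmr _ t0us; have := Hmu _ t0rs.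
  by rewrite /= !hid //= => -> ->.
- move=> hhas hdeg.
  have Hsmall : forall t, t \in s -> (size (Ww t.2) < k)%N.
    by move=> t ts; apply: leq_ltn_trans (Hmu _ ts) _; rewrite -Hdu.
  have Hb : forall t, t \in s -> forall q, q \in t.2 -> (q.2 < k)%N.
    move=> t ts [a b] qi /=; apply: leq_ltn_trans (Hsmall _ ts).
    rewrite size_Ww ?hss //; have := b_le_sumB qi; lia.
  have hinjr : {in s &, injective (fun t => Fm k t.2)}.
    move=> t t' ts t's /= e; apply: hinj => //.
    exact: (Fm_inj k0 (Hb _ ts) (Hb _ t's) e).
  have [t0r t0rs [Hmr Hdr Hcr]] := deg_lemma (mu := fun t => muf (p`_k)%R beta alpha t.2)
     (E := fun t => Phi (fF alpha p) (gG beta gamma) (u_ab K t.2)) (F := fun t => Fm k t.2)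
     us' sne hcr hsr hdr htr hinjr
     (rho_lincomb alpha beta gamma p s).
  have hkD : (k <= size (Ww (Fm k t0r.2)))%N.
    have [t1 t1s h1] := hasP hhas.
    apply: leq_trans (Hmr _ t1s); rewrite size_Ww ?hsr // sumA_Fm sumB_Fm.
    have hA := sumA_has h1.
    apply: leq_trans (leq_addr _ _); rewrite add0n; apply: leq_trans (leq_addr _ _).
    exact: leq_pmulr.
  exists (size (Ww (Fm k t0r.2))); split => //.
  move=> /inV_emb [n [c e]].
  have := congr1 (mcoeff (mw (Ww (Fm k t0r.2)))) e.
  rewrite emb_coef hom_coef eqxx raddf_sum big1_seq.
    by move=> h; rewrite h eqxx in Hcr.
  move=> i _ /=; rewrite mcoeffZ.
  case: (((Cm : Alg K) ^+ i)@_(mw (Ww (Fm k t0r.2))) =P 0%R) => [->|/eqP nz].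
    by rewrite GRing.mulr0.
  have bal := Cm_pow_bal nz.
  have := count_Ww (hsr _ t0rs); rewrite sumA_Fm sumB_Fm bal => h.
  have h2 : (k * sumA t0r.2 + sumB t0r.2 == 0)%N.
    by move: h; rewrite addn0 -{1}(addn0 (count negb _)) => /eqP; rewrite eqn_add2l eq_sym.
  have sa0 : sumA t0r.2 = 0%N.
    move: h2; rewrite addn_eq0 muln_eq0 => /andP [/orP [/eqP k00|/eqP //] _].
    by rewrite k00 in k0.
  move: hkD; rewrite Fm_id // => hkD.
  by have := leq_ltn_trans hkD (Hsmall _ t0rs); rewrite ltnn.
Qed.
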